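(* Let $R(u,s)=\sqrt{u^3/3+u^2+s}$, $\rho(s)=\dfrac{5}{3s(3s+4)}$, $$P(u,s)=\tfrac{2}{15}\Bigl[u(2-u)(3+u)^2+6s(1+u)\Bigr],\qquad Q(u,s)=\rho(s)\frac{P(u,s)}{R(u,s)}.$$ Then, wherever $s\notin\{0,-4/3\}$ and $R(u,s)\neq0$ (with the same branch of $R$ used in $Q$ and on the right side), $$\frac{\partial Q}{\partial u}=\frac{1}{R(u,s)^3}-\rho(s)R(u,s).$$ Consequently, if $\mathcal{C}$ is a closed piecewise smooth curve and $s$ ranges over an open set on which no root of $u^3/3+u^2+s$ meets $\mathcal{C}$ and $R(\cdot,s)$ has a single-valued continuous branch along $\mathcal{C}$ depending analytically on $s$, then with $$J(s)=\oint_{\mathcal{C}}R(v,s)\,dv,\qquad L(s)=\oint_{\mathcal{C}}\frac{dv}{R(v,s)}$$ we have $$\frac{dJ}{ds}=\frac12 L(s),\qquad \frac{dL}{ds}=-\oint_{\mathcal{C}}\frac{dv}{2R(v,s)^3}=-\frac12\rho(s)J(s).$$ *)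

(* Defs.v *)
From Stdlib Require Import Reals.
From Coquelicot Require Import Coquelicot.
Open Scope C_scope.

Definition fcub (u s : C) : C := u * u * u / RtoC 3 + u * u + s.

Definition rho (s : C) : C := RtoC 5 / (RtoC 3 * s * (RtoC 3 * s + RtoC 4)).

Definition Pp (u s : C) : C :=
  RtoC 2 / RtoC 15 *
  (u * (RtoC 2 - u) * ((RtoC 3 + u) * (RtoC 3 + u)) + RtoC 6 * s * (RtoC 1 + u)).

Record cpiece := CPiece { pg : R -> C; pdg : R -> C; pa : R; pb : R }.

Definition smooth_piece (p : cpiece) : Prop :=
  (pa p < pb p)%R /\
  (forall t, (pa p <= t <= pb p)%R ->
     @is_derive R_AbsRing C_R_NormedModule (pg p) t (pdg p t)) /\
  (forall t, (pa p <= t <= pb p)%R ->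
     @continuous R_UniformSpace C_R_NormedModule (pdg p) t).

Definition closed_pw_smooth (c : nat -> cpiece) (n : nat) : Prop :=
  (0 < n)%nat /\
  (forall i, (i < n)%nat -> smooth_piece (c i)) /\
  (forall i, (S i < n)%nat -> pg (c i) (pb (c i)) = pg (c (S i)) (pa (c (S i)))) /\
  pg (c (pred n)) (pb (c (pred n))) = pg (c O) (pa (c O)).

Fixpoint csum (n : nat) (a : nat -> C) : C :=
  match n with O => RtoC 0 | S m => csum m a + a m end.

(* Contour integral over the curve of an integrand given along the curve:
   F i t is the value of the integrand at the point pg (c i) t of piece i.
   \oint F dv = sum_i \int_{a_i}^{b_i} F i t * g_i'(t) dt. *)
Definition cint (c : nat -> cpiece) (n : nat) (F : nat -> R -> C) : C :=
  csum n (fun i => @RInt C_R_CompleteNormedModule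
                      (fun t => F i t * pdg (c i) t) (pa (c i)) (pb (c i))).

(* B is a single-valued continuous branch of R(v,s) = sqrt(fcub v s) along the
   curve, for s in U: B i t s is the value at the point pg (c i) t; no root of
   fcub(.,s) lies on the curve; B is continuous along each piece, matches at the
   junctions (single-valued, including closing up) and depends analytically on s. *)
Definition branch_along (c : nat -> cpiece) (n : nat) (U : C -> Prop)
    (B : nat -> R -> C -> C) : Prop :=
  forall s, U s ->
    (forall i t, (i < n)%nat -> (pa (c i) <= t <= pb (c i))%R ->
       fcub (pg (c i) t) s <> RtoC 0 /\
       B i t s * B i t s = fcub (pg (c i) t) s /\
       filterlim (fun t' => B i t' s)
         (within (fun t' => (pa (c i) <= t' <= pb (c i))%R) (locally t))
         (locally (B i t s)) /\
       @ex_derive C_AbsRing C_NormedModule (fun z => B i t z) s) /\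
    (forall i, (S i < n)%nat -> B i (pb (c i)) s = B (S i) (pa (c (S i))) s) /\
    B (pred n) (pb (c (pred n))) s = B O (pa (c O)) s.

(* Main.v *)
Require Import Defs.
From Stdlib Require Import Reals Lra Psatz Ranalysis5.
From Coquelicot Require Import Coquelicot.
Open Scope C_scope.


Lemma nCR (z : C) : @norm R_AbsRing C_R_NormedModule z = Cmod z.
Proof. destruct z as [x y]. unfold norm. simpl. unfold prod_norm, Cmod. simpl. unfold norm; simpl; unfold abs; simpl. f_equal. rewrite !Rmult_1_r, <- !Rabs_mult, !Rabs_right; try apply Rle_ge; try nra. Qed.
Lemma sCR (r : R) (z : C) : @scal R_AbsRing C_R_NormedModule r z = RtoC r * z.
Proof. destruct z as [x y]. unfold scal; simpl. unfold prod_scal, Cmult; simpl. unfold scal; simpl; unfold mult; simpl. f_equal; ring. Qed.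
Lemma mCR (z w : C) : @minus C_R_NormedModule z w = z - w.
Proof. reflexivity. Qed.
Lemma mC (z w : C) : @minus C_NormedModule z w = z - w.
Proof. reflexivity. Qed.
Lemma absR (x y : R) : @abs R_AbsRing (@minus R_AbsRing y x) = Rabs (y - x).
Proof. reflexivity. Qed.
Lemma absC (x y : C) : @abs C_AbsRing (@minus C_AbsRing y x) = Cmod (y - x).
Proof. reflexivity. Qed.

Lemma Cmod_tri_minus (a b : C) : Cmod (a - b) <= Cmod a + Cmod b.
Proof. unfold Cminus. eapply Rle_trans. apply Cmod_triangle. rewrite Cmod_opp. lra. Qed.
Lemma Cmod_rev (a b : C) : Rabs (Cmod a - Cmod b) <= Cmod (a - b).
Proof.
  assert (H1 : Cmod a <= Cmod (a - b) + Cmod b).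
  { replace a with ((a - b) + b) at 1 by ring. apply Cmod_triangle. }
  assert (H2 : Cmod b <= Cmod (a - b) + Cmod a).
  { replace b with (-(a - b) + a) at 1 by ring. eapply Rle_trans. apply Cmod_triangle. rewrite Cmod_opp. lra. }
  apply Rabs_le. lra.
Qed.
Lemma Cmod_rev_l (a b : C) : (Cmod a - Cmod b <= Cmod (a - b))%R.
Proof. replace a with ((a - b) + b) at 1 by ring. assert (T := Cmod_triangle (a - b) b). lra. Qed.
Lemma Cmod_sub_sym (a b : C) : Cmod (a - b) = Cmod (b - a).
Proof. replace (a - b) with (-(b - a)) by ring. apply Cmod_opp. Qed.
Lemma Cmod_pos (a : C) : a <> 0 -> (0 < Cmod a)%R.
Proof. intros H. destruct (Cmod_ge_0 a) as [H1|H1]; auto. symmetry in H1. apply Cmod_eq_0 in H1. tauto. Qed.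
Lemma Cmod_RtoC_mult (r : R) (z : C) : Cmod (RtoC r * z) = (Rabs r * Cmod z)%R.
Proof. rewrite Cmod_mult, Cmod_R. reflexivity. Qed.

Definition ccont {K : AbsRing} (f : K -> C) (x : K) : Prop :=
  forall eps : R, (0 < eps)%R -> exists d : R, (0 < d)%R /\
    forall y, (abs (minus y x) < d)%R -> (Cmod (f y - f x) < eps)%R.

Section CC.
Context {K : AbsRing}.

Lemma ccont_const (c : C) (x : K) : ccont (fun _ => c) x.
Proof. intros eps He. exists 1%R. split; [lra|]. intros y _. replace (c - c) with (RtoC 0) by ring. rewrite Cmod_0. lra. Qed.

Lemma ccont_plus (f g : K -> C) x : ccont f x -> ccont g x -> ccont (fun y => f y + g y) x.
Proof.
  intros Hf Hg eps He. destruct (Hf (eps/2)%R) as [d1 [Hd1 H1]]; [lra|].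
  destruct (Hg (eps/2)%R) as [d2 [Hd2 H2]]; [lra|].
  exists (Rmin d1 d2). split. apply Rmin_pos; auto. intros y Hy.
  replace (f y + g y - (f x + g x)) with ((f y - f x) + (g y - g x)) by ring.
  eapply Rle_lt_trans. apply Cmod_triangle.
  assert (A1 := H1 y (Rlt_le_trans _ _ _ Hy (Rmin_l _ _))).
  assert (A2 := H2 y (Rlt_le_trans _ _ _ Hy (Rmin_r _ _))). lra.
Qed.

Lemma ccont_opp (f : K -> C) x : ccont f x -> ccont (fun y => - f y) x.
Proof.
  intros Hf eps He. destruct (Hf eps He) as [d [Hd H]]. exists d. split; auto.
  intros y Hy. replace (- f y - - f x) with (-(f y - f x)) by ring. rewrite Cmod_opp. auto.
Qed.

Lemma ccont_minus (f g : K -> C) x : ccont f x -> ccont g x -> ccont (fun y => f y - g y) x.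
Proof. intros Hf Hg. apply (ccont_plus f (fun y => - g y)); auto. apply ccont_opp; auto. Qed.

Lemma ccont_mult (f g : K -> C) x : ccont f x -> ccont g x -> ccont (fun y => f y * g y) x.
Proof.
  intros Hf Hg eps He.
  set (A := Cmod (f x)). set (B := Cmod (g x)).
  assert (HA : (0 <= A)%R) by apply Cmod_ge_0. assert (HB : (0 <= B)%R) by apply Cmod_ge_0.
  destruct (Hf (eps / (2 * (B + 1)))%R) as [d1 [Hd1 H1]].
  { apply Rdiv_lt_0_compat; lra. }
  destruct (Hg (Rmin 1 (eps / (2 * (A + 1))))%R) as [d2 [Hd2 H2]].
  { apply Rmin_pos; [lra|]. apply Rdiv_lt_0_compat; lra. }
  exists (Rmin d1 d2). split. apply Rmin_pos; auto. intros y Hy.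
  assert (A1 := H1 y (Rlt_le_trans _ _ _ Hy (Rmin_l _ _))).
  assert (A2 := H2 y (Rlt_le_trans _ _ _ Hy (Rmin_r _ _))).
  replace (f y * g y - f x * g x) with ((f y - f x) * g y + f x * (g y - g x)) by ring.
  eapply Rle_lt_trans. apply Cmod_triangle. rewrite !Cmod_mult.
  assert (Hgy : (Cmod (g y) <= B + 1)%R).
  { replace (g y) with ((g y - g x) + g x) by ring. eapply Rle_trans. apply Cmod_triangle.
    assert (Rmin 1 (eps / (2 * (A + 1))) <= 1)%R by apply Rmin_l. fold B. lra. }
  assert (E1 : (Cmod (f y - f x) * Cmod (g y) <= eps / (2 * (B+1)) * (B + 1))%R).
  { apply Rmult_le_compat; try apply Cmod_ge_0; lra. }
  assert (E2 : (A * Cmod (g y - g x) <= A * (eps / (2 * (A + 1))))%R).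
  { apply Rmult_le_compat_l; auto. assert (Rmin 1 (eps / (2 * (A + 1))) <= eps / (2 * (A + 1)))%R by apply Rmin_r. lra. }
  assert (E3 : (eps / (2 * (B+1)) * (B + 1) = eps / 2)%R) by (field; lra).
  assert (E4 : (A * (eps / (2 * (A + 1))) < eps / 2)%R).
  { apply (Rmult_lt_reg_r (2 * (A + 1))%R). lra. unfold Rdiv. field_simplify; try lra. }
  fold A. lra.
Qed.

Lemma ccont_inv (f : K -> C) x : ccont f x -> f x <> 0 -> ccont (fun y => / f y) x.
Proof.
  intros Hf Hnz eps He. set (A := Cmod (f x)).
  assert (HA : (0 < A)%R) by (apply Cmod_pos; auto).
  destruct (Hf (Rmin (A / 2) (eps * A * A / 2)))%R as [d [Hd H]].
  { apply Rmin_pos. lra. apply Rdiv_lt_0_compat; [|lra]. apply Rmult_lt_0_compat; [|lra]. nra. }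
  exists d. split; auto. intros y Hy. specialize (H y Hy).
  assert (H1 := Rmin_l (A/2) (eps * A * A / 2)). assert (H2 := Rmin_r (A/2) (eps * A * A / 2)).
  assert (Hfy : (A / 2 <= Cmod (f y))%R).
  { assert (T := Cmod_rev_l (f x) (f y)). rewrite Cmod_sub_sym in T. fold A in T. lra. }
  assert (Hfy0 : f y <> 0). { intros E. rewrite E, Cmod_0 in Hfy. lra. }
  replace (/ f y - / f x) with ((f x - f y) / (f y * f x)) by (field; auto).
  rewrite Cmod_div by (apply Cmult_neq_0; auto). rewrite Cmod_mult, Cmod_sub_sym. fold A.
  apply (Rmult_lt_reg_r (Cmod (f y) * A)). nra. unfold Rdiv. rewrite Rmult_assoc, Rinv_l by nra.
  rewrite Rmult_1_r.
  assert (eps * (A/2) * A <= eps * Cmod (f y) * A)%R.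
  { apply Rmult_le_compat_r; [lra|]. apply Rmult_le_compat_l; lra. }
  lra.
Qed.

Lemma ccont_div (f g : K -> C) x : ccont f x -> ccont g x -> g x <> 0 -> ccont (fun y => f y / g y) x.
Proof. intros Hf Hg Hn. apply (ccont_mult f (fun y => / g y)); auto. apply ccont_inv; auto. Qed.

End CC.

Lemma ccont_idC (x : C) : @ccont C_AbsRing (fun y => y) x.
Proof. intros eps He. exists eps. split; auto. Qed.

Lemma dC_intro (f : C -> C) x l :
  (forall eps : R, (0 < eps)%R -> exists d : R, (0 < d)%R /\ forall y, (Cmod (y - x) < d)%R ->
     (Cmod (f y - f x - (y - x) * l) <= eps * Cmod (y - x))%R) ->
  @is_derive C_AbsRing C_NormedModule f x l.
Proof.
  intros H. split. apply is_linear_scal_l.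
  intros x' Hx'. apply (@is_filter_lim_locally_unique _ (AbsRing_NormedModule _)) in Hx'. subst x'.
  intros eps. destruct (H eps (cond_pos eps)) as [d [Hd Hy]].
  exists (mkposreal d Hd). intros y Hb. apply Hy. exact Hb.
Qed.
Lemma dR_intro (f : R -> C) x l :
  (forall eps : R, (0 < eps)%R -> exists d : R, (0 < d)%R /\ forall y, (Rabs (y - x) < d)%R ->
     (Cmod (f y - f x - RtoC (y - x) * l) <= eps * Rabs (y - x))%R) ->
  @is_derive R_AbsRing C_R_NormedModule f x l.
Proof.
  intros H. split. apply is_linear_scal_l.
  intros x' Hx'. apply (@is_filter_lim_locally_unique _ (AbsRing_NormedModule _)) in Hx'. subst x'.
  intros eps. destruct (H eps (cond_pos eps)) as [d [Hd Hy]].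
  exists (mkposreal d Hd). intros y Hb. rewrite sCR, nCR.
  change (Cmod (f y - f x - RtoC (y - x) * l) <= eps * Rabs (y - x))%R. apply Hy. exact Hb.
Qed.
Lemma dR_elim (f : R -> C) x l : @is_derive R_AbsRing C_R_NormedModule f x l ->
  (forall eps : R, (0 < eps)%R -> exists d : R, (0 < d)%R /\ forall y, (Rabs (y - x) < d)%R ->
     (Cmod (f y - f x - RtoC (y - x) * l) <= eps * Rabs (y - x))%R).
Proof.
  intros [_ H] eps He. specialize (H x (fun P HP => HP) (mkposreal eps He)).
  destruct H as [d Hd]. exists d. split. apply cond_pos. intros y Hy.
  specialize (Hd y Hy). rewrite sCR, nCR in Hd. exact Hd.
Qed.
Lemma dC_elim (f : C -> C) x l : @is_derive C_AbsRing C_NormedModule f x l ->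
  (forall eps : R, (0 < eps)%R -> exists d : R, (0 < d)%R /\ forall y, (Cmod (y - x) < d)%R ->
     (Cmod (f y - f x - (y - x) * l) <= eps * Cmod (y - x))%R).
Proof.
  intros [_ H] eps He. specialize (H x (fun P HP => HP) (mkposreal eps He)).
  destruct H as [d Hd]. exists d. split. apply cond_pos. intros y Hy.
  exact (Hd y Hy).
Qed.

Lemma carC (f phi : C -> C) x : @ccont C_AbsRing phi x ->
  (exists d, (0 < d)%R /\ forall y, (Cmod (y - x) < d)%R -> f y - f x = (y - x) * phi y) ->
  @is_derive C_AbsRing C_NormedModule f x (phi x).
Proof.
  intros Hc [d0 [Hd0 He]]. apply dC_intro. intros eps Heps.
  destruct (Hc eps Heps) as [d1 [Hd1 H1]]. exists (Rmin d0 d1). split. apply Rmin_pos; auto.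
  intros y Hy. rewrite He by (eapply Rlt_le_trans; [exact Hy| apply Rmin_l]).
  replace ((y - x) * phi y - (y - x) * phi x) with ((y - x) * (phi y - phi x)) by ring.
  rewrite Cmod_mult, Rmult_comm. apply Rmult_le_compat_r. apply Cmod_ge_0.
  left. apply H1. rewrite absC. eapply Rlt_le_trans; [exact Hy| apply Rmin_r].
Qed.

Lemma carR (f phi : R -> C) x : @ccont R_AbsRing phi x ->
  (exists d, (0 < d)%R /\ forall y, (Rabs (y - x) < d)%R -> f y - f x = RtoC (y - x) * phi y) ->
  @is_derive R_AbsRing C_R_NormedModule f x (phi x).
Proof.
  intros Hc [d0 [Hd0 He]]. apply dR_intro. intros eps Heps.
  destruct (Hc eps Heps) as [d1 [Hd1 H1]]. exists (Rmin d0 d1). split. apply Rmin_pos; auto.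
  intros y Hy. rewrite He by (eapply Rlt_le_trans; [exact Hy| apply Rmin_l]).
  replace (RtoC (y - x) * phi y - RtoC (y - x) * phi x) with (RtoC (y - x) * (phi y - phi x)) by ring.
  rewrite Cmod_mult, Cmod_R, Rmult_comm. apply Rmult_le_compat_r. apply Rabs_pos.
  left. apply H1. rewrite absR. eapply Rlt_le_trans; [exact Hy| apply Rmin_r].
Qed.

Lemma carR_exists (g : R -> C) t l : @is_derive R_AbsRing C_R_NormedModule g t l ->
  exists phi, @ccont R_AbsRing phi t /\ phi t = l /\ forall y, g y - g t = RtoC (y - t) * phi y.
Proof.
  intros Hd. exists (fun y => match Req_EM_T y t with left _ => l | right _ => (g y - g t) / RtoC (y - t) end).
  split; [|split].
  - intros eps He. destruct (dR_elim g t l Hd (eps/2)%R) as [d [Hd0 H]]; [lra|].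
    exists d. split; auto. intros y Hy. rewrite absR in Hy.
    destruct (Req_EM_T t t) as [_|n]; [|congruence].
    destruct (Req_EM_T y t) as [e|n].
    + replace (l - l) with (RtoC 0) by ring. rewrite Cmod_0. lra.
    + assert (Hyt : RtoC (y - t) <> 0). { intros E. apply RtoC_inj in E. apply n. lra. }
      replace ((g y - g t) / RtoC (y - t) - l) with ((g y - g t - RtoC (y - t) * l) / RtoC (y - t)) by (field; auto).
      rewrite Cmod_div, Cmod_R by auto.
      assert (Hp : (0 < Rabs (y - t))%R) by (apply Rabs_pos_lt; lra).
      specialize (H y Hy). apply (Rmult_lt_reg_r (Rabs (y - t))); auto.
      unfold Rdiv. rewrite Rmult_assoc, Rinv_l, Rmult_1_r by lra. nra.
  - destruct (Req_EM_T t t); congruence.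
  - intros y. destruct (Req_EM_T y t) as [e|n].
    + subst. replace (t - t)%R with 0%R by ring. ring.
    + assert (Hyt : RtoC (y - t) <> 0). { intros E. apply RtoC_inj in E. apply n. lra. }
      field. auto.
Qed.

Lemma ccont_of_deriveC (f : C -> C) x : @ex_derive C_AbsRing C_NormedModule f x -> @ccont C_AbsRing f x.
Proof.
  intros [l Hl]. intros eps He. destruct (dC_elim f x l Hl 1%R) as [d [Hd H]]; [lra|].
  set (M := (1 + Cmod l)%R). assert (HM : (0 < M)%R) by (unfold M; assert (T := Cmod_ge_0 l); lra).
  exists (Rmin d (eps / M)). split. apply Rmin_pos; auto. apply Rdiv_lt_0_compat; auto.
  intros y Hy. rewrite absC in Hy.
  assert (Hy1 : (Cmod (y - x) < d)%R) by (eapply Rlt_le_trans; [exact Hy| apply Rmin_l]).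
  assert (Hy2 : (Cmod (y - x) < eps / M)%R) by (eapply Rlt_le_trans; [exact Hy| apply Rmin_r]).
  specialize (H y Hy1).
  replace (f y - f x) with ((f y - f x - (y - x) * l) + (y - x) * l) by ring.
  eapply Rle_lt_trans. apply Cmod_triangle. rewrite Cmod_mult.
  apply (Rmult_lt_compat_r M) in Hy2; auto. unfold Rdiv in Hy2. rewrite Rmult_assoc, Rinv_l, Rmult_1_r in Hy2 by lra.
  unfold M in Hy2. lra.
Qed.

Lemma ccont_of_contR (f : R -> C) t : @continuous R_UniformSpace C_R_NormedModule f t -> @ccont R_AbsRing f t.
Proof.
  intros Hc eps He.
  assert (Hl : @locally C_R_NormedModule (f t) (fun z => (Cmod (z - f t) < eps)%R)).
  { apply (@locally_le_locally_norm R_AbsRing C_R_NormedModule). exists (mkposreal eps He). intros z Hz. unfold ball_norm in Hz.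
    rewrite nCR in Hz. exact Hz. }
  specialize (Hc _ Hl). destruct Hc as [d Hd]. exists d. split. apply cond_pos.
  intros y Hy. apply Hd. exact Hy.
Qed.

Lemma contR_of_ccont (f : R -> C) t : @ccont R_AbsRing f t -> @continuous R_UniformSpace C_R_NormedModule f t.
Proof.
  intros Hc P HP. apply (@locally_norm_le_locally R_AbsRing C_R_NormedModule) in HP.
  destruct HP as [eps HP]. destruct (Hc eps (cond_pos eps)) as [d [Hd H]].
  exists (mkposreal d Hd). intros y Hy. apply HP. unfold ball_norm. rewrite nCR. apply H. exact Hy.
Qed.

Definition clamp (a b y : R) : R := Rmax a (Rmin y b).
Lemma clamp_in a b y : (a <= b)%R -> (a <= clamp a b y <= b)%R.
Proof. intros H. unfold clamp, Rmax, Rmin. repeat destruct Rle_dec; lra. Qed.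
Lemma clamp_id a b y : (a <= y <= b)%R -> clamp a b y = y.
Proof. intros H. unfold clamp, Rmax, Rmin. repeat destruct Rle_dec; lra. Qed.
Lemma clamp_lip a b y t : (a <= b)%R -> (Rabs (clamp a b y - clamp a b t) <= Rabs (y - t))%R.
Proof. intros H. unfold clamp, Rmax, Rmin. repeat destruct Rle_dec; unfold Rabs; repeat destruct Rcase_abs; lra. Qed.

Definition wcont (F : R -> C) (a b t : R) : Prop :=
  forall eps : R, (0 < eps)%R -> exists d : R, (0 < d)%R /\
    forall y, (a <= y <= b)%R -> (Rabs (y - t) < d)%R -> (Cmod (F y - F t) < eps)%R.

Lemma wcont_of_filterlim (F : R -> C) a b t :
  filterlim F (within (fun t' => (a <= t' <= b)%R) (locally t)) (locally (F t)) -> wcont F a b t.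
Proof.
  intros Hc eps He.
  assert (Hl : @locally C_R_NormedModule (F t) (fun z => (Cmod (z - F t) < eps)%R)).
  { apply (@locally_le_locally_norm R_AbsRing C_R_NormedModule). exists (mkposreal eps He). intros z Hz. unfold ball_norm in Hz.
    rewrite nCR in Hz. exact Hz. }
  specialize (Hc _ Hl). destruct Hc as [d Hd]. exists d. split. apply cond_pos.
  intros y Hy1 Hy2. apply Hd; auto.
Qed.

Lemma ccont_clamp (F : R -> C) a b t : (a <= t <= b)%R -> wcont F a b t ->
  @ccont R_AbsRing (fun y => F (clamp a b y)) t.
Proof.
  intros Ht Hw eps He. destruct (Hw eps He) as [d [Hd H]]. exists d. split; auto.
  intros y Hy. rewrite absR in Hy. rewrite (clamp_id a b t Ht).
  apply H. apply clamp_in; lra.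
  assert (T := clamp_lip a b y t). rewrite (clamp_id a b t Ht) in T. lra.
Qed.


Definition Phi (v u : C) : C := (v * v + v * u + u * u) / RtoC 3 + v + u.
Definition Pi (v u s : C) : C := RtoC 2 / RtoC 15 *
  (- (v * v * v + v * v * u + v * u * u + u * u * u) - RtoC 4 * (v * v + v * u + u * u)
   + RtoC 3 * (v + u) + RtoC 18 + RtoC 6 * s).
Definition Psi (v u s Rv Ru : C) : C :=
  rho s * (Pi v u s * Ru - Pp u s * Phi v u / (Rv + Ru)) / (Rv * Ru).

Lemma R3ne : RtoC 3 <> 0. Proof. intros E. apply RtoC_inj in E. lra. Qed.
Lemma R15ne : RtoC 15 <> 0. Proof. intros E. apply RtoC_inj in E. lra. Qed.
Lemma R2ne : RtoC 2 <> 0. Proof. intros E. apply RtoC_inj in E. lra. Qed.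

Lemma fcub_diff v u s : fcub v s - fcub u s = (v - u) * Phi v u.
Proof. unfold fcub, Phi. field; try apply R3ne. Qed.
Lemma fcub_s v s z : fcub v z - fcub v s = z - s.
Proof. unfold fcub. ring. Qed.
Lemma Pp_diff v u s : Pp v s - Pp u s = (v - u) * Pi v u s.
Proof. unfold Pp, Pi. field; try apply R15ne. Qed.

Lemma alg1 (Pv Pu Rv Ru D Pi0 Ph S : C) : S <> 0 -> Pv = Pu + D * Pi0 -> Rv - Ru = D * Ph / S ->
  Pv * Ru - Pu * Rv = D * (Pi0 * Ru - Pu * Ph / S).
Proof.
  intros HS H1 H2. replace Rv with (Ru + D * Ph / S) by (rewrite <- H2; ring). rewrite H1. field; auto.
Qed.

Lemma sqrt_diff (Rv Ru Fv Fu : C) : Rv * Rv = Fv -> Ru * Ru = Fu -> Rv + Ru <> 0 ->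
  Rv - Ru = (Fv - Fu) / (Rv + Ru).
Proof. intros H1 H2 H3. rewrite <- H1, <- H2. field; auto. Qed.

Lemma DI v u s Rv Ru : Rv * Rv = fcub v s -> Ru * Ru = fcub u s -> Rv <> 0 -> Ru <> 0 -> Rv + Ru <> 0 ->
  rho s * Pp v s / Rv - rho s * Pp u s / Ru = (v - u) * Psi v u s Rv Ru.
Proof.
  intros H1 H2 H3 H4 H5.
  assert (E : Pp v s * Ru - Pp u s * Rv = (v - u) * (Pi v u s * Ru - Pp u s * Phi v u / (Rv + Ru))).
  { apply alg1; auto. rewrite <- Pp_diff. ring. rewrite (sqrt_diff _ _ _ _ H1 H2 H5). rewrite fcub_diff. reflexivity. }
  unfold Psi. transitivity (rho s * (Pp v s * Ru - Pp u s * Rv) / (Rv * Ru)).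
  field; auto. rewrite E. field; auto.
Qed.

Lemma s43 (s : C) : s <> RtoC (-4/3) -> RtoC 3 * s + RtoC 4 <> 0.
Proof. intros H E. apply H.
  transitivity ((RtoC 3 * s + RtoC 4 - RtoC 4) / RtoC 3). field; apply R3ne.
  rewrite E. replace (-4/3)%R with ((0 - 4)/3)%R by field.
  rewrite RtoC_div by lra. rewrite RtoC_minus. reflexivity.
Qed.

Lemma CA u s R0 : R0 * R0 = fcub u s -> R0 <> 0 -> s <> 0 -> s <> RtoC (-4/3) ->
  Psi u u s R0 R0 = RtoC 1 / (R0 * R0 * R0) - rho s * R0.
Proof.
  intros H1 H2 H3 H4. assert (H5 := s43 s H4). unfold Psi.
  assert (H6 : R0 + R0 <> 0). { replace (R0+R0) with (RtoC 2 * R0) by ring. apply Cmult_neq_0; auto; apply R2ne. }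
  transitivity (rho s * (Pi u u s * (R0 * R0) - Pp u s * Phi u u / RtoC 2) / (R0 * R0 * R0)).
  { field; repeat split; auto; try apply R2ne. }
  transitivity ((RtoC 1 - rho s * (R0 * R0) * (R0 * R0)) / (R0 * R0 * R0)).
  2:{ field; auto. }
  f_equal. rewrite H1. unfold rho, Pi, Pp, Phi, fcub. field;
  repeat split; auto; try apply R3ne.
Qed.


Lemma is_RInt_Cmult (f : R -> C) a b (l c : C) :
  @is_RInt C_R_NormedModule f a b l -> @is_RInt C_R_NormedModule (fun t => c * f t) a b (c * l).
Proof.
  intros H.
  assert (H1 := @is_RInt_fct_extend_fst R_NormedModule R_NormedModule f a b l H).
  assert (H2 := @is_RInt_fct_extend_snd R_NormedModule R_NormedModule f a b l H).
  destruct c as [cr ci]. destruct l as [lr li]. simpl in H1, H2.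
  assert (A1 := @is_RInt_minus R_NormedModule _ _ a b _ _ (is_RInt_scal _ a b cr _ H1) (is_RInt_scal _ a b ci _ H2)).
  assert (A2 := @is_RInt_plus R_NormedModule _ _ a b _ _ (is_RInt_scal _ a b cr _ H2) (is_RInt_scal _ a b ci _ H1)).
  set (g := fun t => ((cr * fst (f t) - ci * snd (f t))%R, (cr * snd (f t) + ci * fst (f t))%R)).
  assert (P := @is_RInt_fct_extend_pair R_NormedModule R_NormedModule g a b _ _ A1 A2).
  eapply is_RInt_ext; [|exact P]. intros t _. unfold g. simpl. unfold Cmult. simpl. reflexivity.
Qed.

Notation RIntC := (@RInt C_R_CompleteNormedModule).

Lemma Cminus_zero (x y : C) : x - y = 0 -> x = y.
Proof. intros H. replace x with (x - y + y) by ring. rewrite H. ring. Qed.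

Lemma Cmod_small_zero (z : C) : (forall e, (0 < e)%R -> (Cmod z < e)%R) -> z = 0.
Proof.
  intros H. apply Cmod_eq_0. destruct (Cmod_ge_0 z) as [Hp|Hz]; auto.
  specialize (H _ Hp). lra.
Qed.

Lemma FTC_open (F f : R -> C) a b : (a < b)%R ->
  (forall t, @ccont R_AbsRing F t) -> (forall t, @ccont R_AbsRing f t) ->
  (forall t, (a < t < b)%R -> @is_derive R_AbsRing C_R_NormedModule F t (f t)) ->
  @is_RInt C_R_NormedModule f a b (F b - F a).
Proof.
  intros Hab HF Hf Hder.
  assert (Hex : forall x y, ex_RInt f x y).
  { intros x y. apply (@ex_RInt_continuous C_R_CompleteNormedModule). intros z _. apply contR_of_ccont. apply Hf. }
  assert (HI := @RInt_correct C_R_CompleteNormedModule f a b (Hex a b)).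
  replace (F b - F a) with (RIntC f a b); auto.
  assert (Hc : @continuous (prod_UniformSpace R_UniformSpace R_UniformSpace) C_R_NormedModule
            (fun z : R * R => RIntC f (fst z) (snd z)) (a, b)).
  { apply (continuous_RInt f a b (fun x y => RIntC f x y)). apply filter_forall. intros z.
    apply (@RInt_correct C_R_CompleteNormedModule). apply Hex. }
  apply Cminus_zero.
  apply Cmod_small_zero. intros e He.
  assert (He3 : (0 < e / 3)%R) by lra.
  assert (Hl : @locally C_R_NormedModule (RIntC f a b) (fun z => (Cmod (z - RIntC f a b) < e / 3)%R)).
  { apply (@locally_le_locally_norm R_AbsRing C_R_NormedModule). exists (mkposreal _ He3). intros z Hz. unfold ball_norm in Hz.
    rewrite nCR in Hz. exact Hz. }
  destruct (Hc _ Hl) as [d1 Hd1].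
  destruct (HF a _ He3) as [d2 [Hd2 H2]]. destruct (HF b _ He3) as [d3 [Hd3 H3]].
  set (d := Rmin (Rmin d1 d2) (Rmin d3 (b - a))).
  assert (Hd : (0 < d)%R). { unfold d. repeat apply Rmin_pos; try lra; try apply cond_pos. }
  assert (Hdd1 : (d <= d1)%R) by (unfold d; eapply Rle_trans; [apply Rmin_l|apply Rmin_l]).
  assert (Hdd2 : (d <= d2)%R) by (unfold d; eapply Rle_trans; [apply Rmin_l|apply Rmin_r]).
  assert (Hdd3 : (d <= d3)%R) by (unfold d; eapply Rle_trans; [apply Rmin_r|apply Rmin_l]).
  assert (Hdd4 : (d <= b - a)%R) by (unfold d; eapply Rle_trans; [apply Rmin_r|apply Rmin_r]).
  set (x := (a + d / 4)%R). set (y := (b - d / 4)%R).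
  assert (Hxy : is_RInt f x y (F y - F x)).
  { apply (@is_RInt_derive C_R_CompleteNormedModule F f x y).
    - intros z Hz. apply Hder. unfold x, y in *. rewrite Rmin_left, Rmax_right in Hz by lra. lra.
    - intros z _. apply contR_of_ccont. apply Hf. }
  assert (E1 : (Cmod (RIntC f x y - RIntC f a b) < e / 3)%R).
  { apply (Hd1 (x, y)). split; simpl.
    - change (Rabs (x - a) < d1)%R. unfold x. rewrite Rabs_right; lra.
    - change (Rabs (y - b) < d1)%R. unfold y. rewrite Rabs_left; lra. }
  assert (E2 : (Cmod (F x - F a) < e / 3)%R). { apply H2. rewrite absR. unfold x. rewrite Rabs_right; lra. }
  assert (E3 : (Cmod (F y - F b) < e / 3)%R). { apply H3. rewrite absR. unfold y. rewrite Rabs_left; lra. }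
  rewrite (@is_RInt_unique C_R_CompleteNormedModule _ _ _ _ Hxy) in E1.
  replace (RIntC f a b - (F b - F a)) with (- (F y - F x - RIntC f a b) + (F y - F b) - (F x - F a)) by ring.
  eapply Rle_lt_trans. apply Cmod_tri_minus. eapply Rle_lt_trans. apply Rplus_le_compat_r. apply Cmod_triangle.
  rewrite Cmod_opp. lra.
Qed.


Lemma rcont_intro (f : R -> R) x :
  (forall eps, (0 < eps)%R -> exists d, (0 < d)%R /\ forall y, (Rabs (y - x) < d)%R -> (Rabs (f y - f x) < eps)%R) ->
  continuity_pt f x.
Proof.
  intros H eps He. destruct (H eps He) as [d [Hd H1]]. exists d. split; auto.
  intros y [_ Hy]. simpl in *. unfold R_dist in *. apply H1. exact Hy.
Qed.

Lemma branch_key (beta : C -> C) (s : C) (r m : R) (h : C) :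
  (0 < m)%R -> (m <= Cmod (beta s))%R -> (0 < r)%R ->
  (forall z : C, (Cmod (z - s) < r)%R -> beta z * beta z = beta s * beta s + (z - s) /\ @ccont C_AbsRing beta z) ->
  (Cmod h < r)%R -> (Cmod h < m * m)%R ->
  (Cmod (beta (s + h)%C - beta s) < Cmod (beta (s + h)%C + beta s))%R.
Proof.
  intros Hm Hmb Hr Hz Hhr Hhm.
  set (phi := fun l : R => (Cmod (beta (s + RtoC l * h)%C - beta s) - Cmod (beta (s + RtoC l * h)%C + beta s))%R).
  assert (Hin : forall l, (0 <= l <= 1)%R -> (Cmod (s + RtoC l * h - s) < r)%R).
  { intros l Hl. replace (s + RtoC l * h - s) with (RtoC l * h) by ring. rewrite Cmod_RtoC_mult.
    rewrite Rabs_right by lra. assert (T := Cmod_ge_0 h). nra. }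
  assert (Zr : forall l, (0 <= l <= 1)%R -> phi l <> 0%R).
  { intros l Hl E. unfold phi in E. set (x := beta (s + RtoC l * h)%C) in *. set (b := beta s) in *.
    destruct (Hz _ (Hin l Hl)) as [Hsq _]. fold x b in Hsq.
    replace (s + RtoC l * h - s) with (RtoC l * h) in Hsq by ring.
    assert (Q1 : Cmod (x - b) = Cmod (x + b)) by lra.
    assert (Q2 : (Cmod (x - b) * Cmod (x + b) <= Cmod h)%R).
    { rewrite <- Cmod_mult. replace ((x - b) * (x + b)) with (RtoC l * h) by (rewrite <- (Cplus_0_r (RtoC l * h)); replace (RtoC l * h + 0) with (x * x - b * b) by (rewrite Hsq; ring); ring).
      rewrite Cmod_RtoC_mult, Rabs_right by lra. assert (T := Cmod_ge_0 h). nra. }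
    assert (Q3 : (2 * Cmod b <= Cmod (x - b) + Cmod (x + b))%R).
    { replace (2 * Cmod b)%R with (Cmod (RtoC 2 * b)) by (rewrite Cmod_mult, Cmod_R, Rabs_right; lra).
      replace (RtoC 2 * b) with ((x + b) - (x - b)) by ring. eapply Rle_trans; [apply Cmod_tri_minus| lra]. }
    rewrite Q1 in Q2, Q3. assert (T := Cmod_ge_0 (x + b)). nra. }
  assert (Ct : forall l, (0 <= l <= 1)%R -> continuity_pt phi l).
  { intros l Hl. apply rcont_intro. intros eps He.
    destruct (Hz _ (Hin l Hl)) as [_ Hc]. destruct (Hc (eps / 2)%R) as [d [Hd H1]]; [lra|].
    exists (d / (Cmod h + 1))%R. split. apply Rdiv_lt_0_compat; auto. assert (T := Cmod_ge_0 h); lra.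
    intros y Hy. unfold phi.
    assert (Hc2 : (Cmod (beta (s + RtoC y * h)%C - beta (s + RtoC l * h)%C) < eps / 2)%R).
    { apply H1. rewrite absC. replace (s + RtoC y * h - (s + RtoC l * h)) with (RtoC (y - l) * h)
        by (rewrite RtoC_minus; ring). rewrite Cmod_RtoC_mult.
      assert (T := Cmod_ge_0 h). assert (Hy' : (Rabs (y - l) * (Cmod h + 1) < d)%R).
      { apply (Rmult_lt_compat_r (Cmod h + 1)) in Hy; [|lra]. unfold Rdiv in Hy.
        rewrite Rmult_assoc, Rinv_l, Rmult_1_r in Hy by lra. exact Hy. }
      assert (T2 := Rabs_pos (y - l)). nra. }
    set (x' := beta (s + RtoC y * h)%C) in *. set (x := beta (s + RtoC l * h)%C) in *. set (b := beta s).
    assert (A1 := Cmod_rev (x' - b) (x - b)). assert (A2 := Cmod_rev (x' + b) (x + b)).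
    replace (x' - b - (x - b)) with (x' - x) in A1 by ring.
    replace (x' + b - (x + b)) with (x' - x) in A2 by ring.
    replace (Cmod (x' - b) - Cmod (x' + b) - (Cmod (x - b) - Cmod (x + b)))%R with
      ((Cmod (x' - b) - Cmod (x - b)) - (Cmod (x' + b) - Cmod (x + b)))%R by ring.
    eapply Rle_lt_trans. apply Rabs_triang. rewrite Rabs_Ropp. lra. }
  assert (P0 : (phi 0 < 0)%R).
  { unfold phi. replace (s + RtoC 0 * h) with s by ring. replace (beta s - beta s) with (RtoC 0) by ring.
    rewrite Cmod_0. replace (beta s + beta s) with (RtoC 2 * beta s) by ring. rewrite Cmod_mult, Cmod_R, Rabs_right by lra. lra. }
  destruct (Rlt_le_dec (phi 1) 0) as [Hn|Hp].
  - unfold phi in Hn. replace (s + RtoC 1 * h) with (s + h) in Hn by ring. lra.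
  - exfalso. destruct Hp as [Hp|Hp].
    + destruct (IVT_interv phi 0 1 Ct) as [z [Hz1 Hz2]]; try lra. apply (Zr z Hz1 Hz2).
    + apply (Zr 1); [lra|]. auto.
Qed.


Lemma branch_est (x b h : C) (m : R) : (0 < m)%R -> (m <= Cmod b)%R -> x * x = b * b + h ->
  Rlt (Cmod (x - b)) (Cmod (x + b)) -> (Cmod h <= m * m / 2)%R ->
  Rle (Cmod (x - b)) (Cmod h / m) /\ x <> 0 /\ Rle (m / 2) (Cmod x).
Proof.
  intros Hm Hb Hsq Hlt Hh.
  assert (E : (Cmod (x - b) * Cmod (x + b) = Cmod h)%R).
  { rewrite <- Cmod_mult. f_equal. replace h with (x * x - b * b) by (rewrite Hsq; ring). ring. }
  assert (Q3 : (2 * Cmod b <= Cmod (x - b) + Cmod (x + b))%R).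
  { replace (2 * Cmod b)%R with (Cmod (RtoC 2 * b)) by (rewrite Cmod_mult, Cmod_R, Rabs_right; lra).
    replace (RtoC 2 * b) with ((x + b) - (x - b)) by ring. eapply Rle_trans; [apply Cmod_tri_minus| lra]. }
  assert (T1 := Cmod_ge_0 (x - b)). assert (T2 := Cmod_ge_0 (x + b)).
  assert (He : (m <= Cmod (x + b))%R) by lra.
  assert (Hd : (Cmod (x - b) <= Cmod h / m)%R).
  { apply (Rmult_le_reg_r m); auto. unfold Rdiv. rewrite Rmult_assoc, Rinv_l, Rmult_1_r by lra. nra. }
  assert (Hd2 : (Cmod (x - b) <= m / 2)%R).
  { eapply Rle_trans; [exact Hd|]. apply (Rmult_le_reg_r m); auto. unfold Rdiv.
    rewrite Rmult_assoc, Rinv_l, Rmult_1_r by lra. nra. }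
  assert (Hx : (m / 2 <= Cmod x)%R).
  { assert (T := Cmod_rev_l b (b - x)). replace (b - (b - x)) with x in T by ring.
    rewrite Cmod_sub_sym in T. lra. }
  split; auto. split; auto. intros E0. rewrite E0, Cmod_0 in Hx. lra.
Qed.

Lemma div_le_compat (A p q : R) : (0 <= A)%R -> (0 < q)%R -> (q <= p)%R -> (A / p <= A / q)%R.
Proof. intros HA Hq Hp. unfold Rdiv. apply Rmult_le_compat_l; auto. apply Rinv_le_contravar; auto. Qed.

Lemma estJ (x b h : C) (m : R) : (0 < m)%R -> (m <= Cmod b)%R -> x * x = b * b + h ->
  Rlt (Cmod (x - b)) (Cmod (x + b)) -> (Cmod h <= m * m / 2)%R ->
  Rle (Cmod (x - b - h * (/ RtoC 2 * (RtoC 1 / b)))) (/ (m * m * m) * (Cmod h * Cmod h)).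
Proof.
  intros Hm Hb Hsq Hlt Hh. destruct (branch_est x b h m Hm Hb Hsq Hlt Hh) as [Hd [Hx0 Hx]].
  assert (Hb0 : b <> 0). { intros E. rewrite E, Cmod_0 in Hb. lra. }
  replace (x - b - h * (/ RtoC 2 * (RtoC 1 / b))) with (- ((x - b) * (x - b)) / (RtoC 2 * b)).
  2:{ replace h with (x * x - b * b) by (rewrite Hsq; ring). field; repeat split; auto; try apply R2ne. }
  rewrite Cmod_div by (apply Cmult_neq_0; auto; apply R2ne).
  rewrite Cmod_opp, !Cmod_mult, Cmod_R, Rabs_right by lra.
  set (D := Cmod (x - b)) in *. set (H := Cmod h) in *. assert (HD := Cmod_ge_0 (x - b)). fold D in HD.
  assert (HH := Cmod_ge_0 h). fold H in HH.
  eapply Rle_trans. apply (div_le_compat _ _ (2 * m)). nra. nra. apply Rmult_le_compat_l. lra. exact Hb.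
  assert (D * D <= (H / m) * (H / m))%R by (apply Rmult_le_compat; auto).
  eapply Rle_trans. apply Rmult_le_compat_r. left. apply Rinv_0_lt_compat. nra. exact H0.
  replace ((H / m) * (H / m) * / (2 * m))%R with (/ (m * m * m) * (H * H) / 2)%R by (field; lra).
  assert (Hm3 : (0 < m * m * m)%R) by (repeat apply Rmult_lt_0_compat; lra).
  assert (0 <= / (m * m * m) * (H * H))%R. { apply Rmult_le_pos. left. apply Rinv_0_lt_compat. exact Hm3. nra. }
  lra.
Qed.

Lemma frac_le (a a' p q : R) : (0 <= a)%R -> (a <= a')%R -> (0 < q)%R -> (q <= p)%R -> (a / p <= a' / q)%R.
Proof.
  intros Ha Haa Hq Hp. apply Rle_trans with (a / q)%R. apply div_le_compat; auto.
  unfold Rdiv. apply Rmult_le_compat_r; auto. left. apply Rinv_0_lt_compat; auto.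
Qed.

Lemma estL (x b h : C) (m Mb : R) : (0 < m)%R -> (m <= Cmod b)%R -> (Cmod b <= Mb)%R -> x * x = b * b + h ->
  Rlt (Cmod (x - b)) (Cmod (x + b)) -> (Cmod h <= m * m / 2)%R ->
  Rle (Cmod (RtoC 1 / x - RtoC 1 / b - h * (RtoC (-1) * (RtoC 1 / (RtoC 2 * (b * b * b))))))
      ((m + 3 * Mb) * / (m * m * m * m * m * m) * (Cmod h * Cmod h)).
Proof.
  intros Hm Hb HM Hsq Hlt Hh. destruct (branch_est x b h m Hm Hb Hsq Hlt Hh) as [Hd [Hx0 Hx]].
  assert (Hb0 : b <> 0). { intros E. rewrite E, Cmod_0 in Hb. lra. }
  replace (RtoC 1 / x - RtoC 1 / b - h * (RtoC (-1) * (RtoC 1 / (RtoC 2 * (b * b * b)))))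
    with ((x - b) * (x - b) * (x + RtoC 2 * b) / (RtoC 2 * x * (b * b * b))).
  2:{ replace h with (x * x - b * b) by (rewrite Hsq; ring). field; repeat split; auto; try apply R2ne. }
  rewrite Cmod_div by (repeat apply Cmult_neq_0; auto; apply R2ne).
  rewrite !Cmod_mult, Cmod_R, Rabs_right by lra.
  set (D := Cmod (x - b)) in *. set (H := Cmod h) in *. assert (HD := Cmod_ge_0 (x - b)). fold D in HD.
  assert (HH := Cmod_ge_0 h). fold H in HH.
  assert (HX : (Cmod (x + RtoC 2 * b) <= m + 3 * Mb)%R).
  { replace (x + RtoC 2 * b) with ((x - b) + RtoC 3 * b) by ring.
    eapply Rle_trans. apply Cmod_triangle. rewrite Cmod_mult, Cmod_R, Rabs_right by lra. fold D.
    assert (D <= m / 2)%R. { eapply Rle_trans; [exact Hd|]. apply (Rmult_le_reg_r m); auto. unfold Rdiv.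
      rewrite Rmult_assoc, Rinv_l, Rmult_1_r by lra. nra. } lra. }
  assert (Hm4 : (0 < m * m * m * m)%R) by (repeat apply Rmult_lt_0_compat; lra).
  eapply Rle_trans. apply (frac_le _ ((H / m) * (H / m) * (m + 3 * Mb)) _ (m * m * m * m)).
  - apply Rmult_le_pos. nra. apply Cmod_ge_0.
  - apply Rmult_le_compat; auto. nra. apply Cmod_ge_0. apply Rmult_le_compat; auto.
  - exact Hm4.
  - replace (m * m * m * m)%R with (2 * (m / 2) * (m * m * m))%R by field.
    assert (T := Cmod_ge_0 b).
    apply Rmult_le_compat. nra. nra. apply Rmult_le_compat_l; lra.
    assert (m * m <= Cmod b * Cmod b)%R by (apply Rmult_le_compat; lra). apply Rmult_le_compat; nra.
  - right. field. lra.
Qed.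


Lemma deriv_param (Phi0 : C -> R -> C) (Psi0 : R -> C) (a b : R) (s : C) (r C0 : R) :
  (a <= b)%R -> (0 < r)%R -> (0 <= C0)%R ->
  (forall y : C, (Cmod (y - s) < r)%R -> ex_RInt (Phi0 y) a b) ->
  ex_RInt Psi0 a b ->
  (forall (y : C) (t : R), (Cmod (y - s) < r)%R -> (a <= t <= b)%R ->
     Rle (Cmod (Phi0 y t - Phi0 s t - (y - s) * Psi0 t)) (C0 * (Cmod (y - s) * Cmod (y - s)))) ->
  @is_derive C_AbsRing C_NormedModule (fun y => RIntC (Phi0 y) a b) s (RIntC Psi0 a b).
Proof.
  intros Hab Hr HC Hex HexP Hb. apply dC_intro. intros eps He.
  set (K := ((b - a) * C0 + 1)%R). assert (HK : (0 < K)%R) by (unfold K; nra).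
  exists (Rmin r (eps / K)). split. apply Rmin_pos; auto. apply Rdiv_lt_0_compat; auto.
  intros y Hy.
  assert (Hy1 : (Cmod (y - s) < r)%R) by (eapply Rlt_le_trans; [exact Hy|apply Rmin_l]).
  assert (Hy2 : (Cmod (y - s) < eps / K)%R) by (eapply Rlt_le_trans; [exact Hy|apply Rmin_r]).
  assert (Hs0 : (Cmod (s - s) < r)%R) by (replace (s - s) with (RtoC 0) by ring; rewrite Cmod_0; auto).
  assert (I1 := @RInt_correct C_R_CompleteNormedModule _ _ _ (Hex y Hy1)).
  assert (I2 := @RInt_correct C_R_CompleteNormedModule _ _ _ (Hex s Hs0)).
  assert (I3 := is_RInt_Cmult _ _ _ _ (y - s) (@RInt_correct C_R_CompleteNormedModule _ _ _ HexP)).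
  assert (I4 := @is_RInt_minus C_R_NormedModule _ _ _ _ _ _ (@is_RInt_minus C_R_NormedModule _ _ _ _ _ _ I1 I2) I3).
  set (H := Cmod (y - s)) in *.
  assert (I5 := @is_RInt_const R_NormedModule a b (C0 * (H * H))%R).
  assert (Hbd : forall t, (a <= t <= b)%R -> (@norm R_AbsRing C_R_NormedModule (minus (minus (Phi0 y t) (Phi0 s t)) ((y - s) * Psi0 t)%C) <= C0 * (H * H))%R).
  { intros t Ht. rewrite nCR. apply Hb; auto. }
  assert (N := @norm_RInt_le C_R_NormedModule _ (fun _ => (C0 * (H * H))%R) a b _ _ Hab Hbd I4 I5).
  rewrite nCR in N. change (Cmod (RIntC (Phi0 y) a b - RIntC (Phi0 s) a b - (y - s) * RIntC Psi0 a b) <= scal (b - a) (C0 * (H * H)))%R in N.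
    eapply Rle_trans. exact N. unfold scal; simpl; unfold mult; simpl.
    assert (HH := Cmod_ge_0 (y - s)). fold H in HH.
    apply Rle_trans with (K * H * H)%R. unfold K. nra.
    assert (K * H <= eps)%R. { apply (Rmult_lt_compat_r K) in Hy2; auto. unfold Rdiv in Hy2.
      rewrite Rmult_assoc, Rinv_l, Rmult_1_r in Hy2 by lra. lra. }
    nra.
Qed.


Ltac cc := repeat first [ apply ccont_const | apply ccont_idC | apply ccont_plus | apply ccont_minus
   | apply ccont_mult | apply ccont_opp | apply ccont_div | apply ccont_inv ].

Lemma near_nz (x y : C) : (Cmod (x - y) < Cmod y)%R -> x <> 0 /\ x + y <> 0.
Proof.
  intros H. split; intros E.
  - rewrite E in H. replace (0 - y) with (- y) in H by ring. rewrite Cmod_opp in H. lra.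
  - replace (x - y) with (- (RtoC 2 * y)) in H by (replace x with (x + y - y) by ring; rewrite E; ring).
    rewrite Cmod_opp, Cmod_mult, Cmod_R, Rabs_right in H by lra. assert (T := Cmod_ge_0 y). lra.
Qed.

Lemma locC (u : C) (P : C -> Prop) : locally u P -> exists d, (0 < d)%R /\ forall v, (Cmod (v - u) < d)%R -> P v.
Proof.
  intros H. destruct (@locally_norm_le_locally C_AbsRing C_NormedModule u P H) as [d Hd].
  exists d. split. apply cond_pos. intros v Hv. apply Hd. exact Hv.
Qed.

Lemma ccont_clamp_all (F : R -> C) a b t : (a <= b)%R -> (forall z, (a <= z <= b)%R -> wcont F a b z) ->
  @ccont R_AbsRing (fun y => F (clamp a b y)) t.
Proof.
  intros Hab Hw eps He. destruct (Hw (clamp a b t) (clamp_in a b t Hab) eps He) as [d [Hd H]].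
  exists d. split; auto. intros y Hy. rewrite absR in Hy. apply H. apply clamp_in; lra.
  assert (T := clamp_lip a b y t Hab). lra.
Qed.

Lemma exR_clamp (h : R -> C) a b : (a <= b)%R -> (forall t, @ccont R_AbsRing (fun y => h (clamp a b y)) t) ->
  @ex_RInt C_R_NormedModule h a b.
Proof.
  intros Hab Hc. apply (@ex_RInt_ext C_R_NormedModule (fun y => h (clamp a b y))).
  - intros x Hx. rewrite Rmin_left, Rmax_right in Hx by lra. rewrite clamp_id; auto. lra.
  - apply (@ex_RInt_continuous C_R_CompleteNormedModule). intros z _. apply contR_of_ccont. apply Hc.
Qed.

Lemma ccont_cmod_pt (f : R -> C) t : @ccont R_AbsRing f t -> continuity_pt (fun y => Cmod (f y)) t.
Proof.
  intros Hc. apply rcont_intro. intros eps He. destruct (Hc eps He) as [d [Hd H]]. exists d. split; auto.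
  intros y Hy. eapply Rle_lt_trans. apply Cmod_rev. apply H. rewrite absR. exact Hy.
Qed.

Lemma ccont_of_deriveR (f : R -> C) x l : @is_derive R_AbsRing C_R_NormedModule f x l -> @ccont R_AbsRing f x.
Proof.
  intros Hl. intros eps He. destruct (dR_elim f x l Hl 1%R) as [d [Hd H]]; [lra|].
  set (M := (1 + Cmod l)%R). assert (HM : (0 < M)%R) by (unfold M; assert (T := Cmod_ge_0 l); lra).
  exists (Rmin d (eps / M)). split. apply Rmin_pos; auto. apply Rdiv_lt_0_compat; auto.
  intros y Hy. rewrite absR in Hy.
  assert (Hy1 : (Rabs (y - x) < d)%R) by (eapply Rlt_le_trans; [exact Hy| apply Rmin_l]).
  assert (Hy2 : (Rabs (y - x) < eps / M)%R) by (eapply Rlt_le_trans; [exact Hy| apply Rmin_r]).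
  specialize (H y Hy1).
  replace (f y - f x) with ((f y - f x - RtoC (y - x) * l) + RtoC (y - x) * l) by ring.
  eapply Rle_lt_trans. apply Cmod_triangle. rewrite Cmod_mult, Cmod_R.
  apply (Rmult_lt_compat_r M) in Hy2; auto. unfold Rdiv in Hy2. rewrite Rmult_assoc, Rinv_l, Rmult_1_r in Hy2 by lra.
  unfold M in Hy2. lra.
Qed.

Lemma wcont_of_ccont (F : R -> C) a b t : @ccont R_AbsRing F t -> wcont F a b t.
Proof. intros Hc eps He. destruct (Hc eps He) as [d [Hd H]]. exists d. split; auto. Qed.

Lemma ccont_interior (F : R -> C) a b t : (a < t < b)%R -> wcont F a b t -> @ccont R_AbsRing F t.
Proof.
  intros Ht Hw eps He. destruct (Hw eps He) as [d [Hd H]]. exists (Rmin d (Rmin (t - a) (b - t))).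
  split. repeat apply Rmin_pos; lra. intros y Hy. rewrite absR in Hy.
  assert (T1 := Rmin_l d (Rmin (t - a) (b - t))). assert (T2 := Rmin_r d (Rmin (t - a) (b - t))).
  assert (T3 := Rmin_l (t - a) (b - t)). assert (T4 := Rmin_r (t - a) (b - t)).
  apply H. apply Rabs_def2 in Hy. lra. lra.
Qed.

Lemma dF_interior (g Bt : R -> C) (dg : C) (s : C) (a b t : R) :
  (a < t < b)%R -> @is_derive R_AbsRing C_R_NormedModule g t dg -> wcont Bt a b t ->
  (forall y, (a <= y <= b)%R -> Bt y * Bt y = fcub (g y) s /\ Bt y <> 0) -> s <> RtoC 0 -> s <> RtoC (-4/3) ->
  @is_derive R_AbsRing C_R_NormedModule (fun y => rho s * Pp (g y) s / Bt y) t
     ((RtoC 1 / (Bt t * Bt t * Bt t) - rho s * Bt t) * dg).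
Proof.
  intros Ht Hd Hw HB Hs1 Hs2.
  destruct (carR_exists g t dg Hd) as [phg [Hpc [Hpt Heq]]].
  assert (HcB := ccont_interior Bt a b t Ht Hw).
  assert (Hcg := ccont_of_deriveR g t dg Hd).
  destruct (HB t) as [Hsq Hnz]; [lra|].
  replace ((RtoC 1 / (Bt t * Bt t * Bt t) - rho s * Bt t) * dg) with (phg t * Psi (g t) (g t) s (Bt t) (Bt t))
    by (rewrite (CA (g t) s (Bt t) Hsq Hnz Hs1 Hs2), Hpt; ring).
  apply (carR _ (fun y => phg y * Psi (g y) (g t) s (Bt y) (Bt t))).
  - assert (Huu : Bt t + Bt t <> 0). { replace (Bt t + Bt t) with (RtoC 2 * Bt t) by ring. apply Cmult_neq_0; auto. apply R2ne. }
    unfold Psi, Pi, Phi. cc; try exact Hcg; try exact HcB; try exact Hpc; auto.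
    all: try (apply Cmult_neq_0; auto). all: try apply R3ne.
  - destruct (HcB (Cmod (Bt t))) as [d1 [Hd1 H1]]. apply Cmod_pos; auto.
    exists (Rmin d1 (Rmin (t - a) (b - t))). split. repeat apply Rmin_pos; lra.
    intros y Hy.
    assert (T1 := Rmin_l d1 (Rmin (t - a) (b - t))). assert (T2 := Rmin_r d1 (Rmin (t - a) (b - t))).
    assert (T3 := Rmin_l (t - a) (b - t)). assert (T4 := Rmin_r (t - a) (b - t)).
    assert (Hy' := Hy). apply Rabs_def2 in Hy'.
    destruct (HB y) as [Hsqy Hnzy]; [lra|].
    destruct (near_nz (Bt y) (Bt t)) as [N1 N2]. apply H1. rewrite absR. lra.
    rewrite (DI (g y) (g t) s (Bt y) (Bt t)); auto. rewrite Heq. ring.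
Qed.


Definition PH (p : cpiece) (Bp : R -> C -> C) (U : C -> Prop) : Prop :=
  forall z, U z -> forall t, (pa p <= t <= pb p)%R ->
    fcub (pg p t) z <> RtoC 0 /\ Bp t z * Bp t z = fcub (pg p t) z /\
    filterlim (fun t' => Bp t' z) (within (fun t' => (pa p <= t' <= pb p)%R) (locally t)) (locally (Bp t z)) /\
    @ex_derive C_AbsRing C_NormedModule (fun w => Bp t w) z.

Lemma PH_nz p Bp U z t : PH p Bp U -> U z -> (pa p <= t <= pb p)%R -> Bp t z <> 0.
Proof. intros H Hz Ht E. destruct (H z Hz t Ht) as [H1 [H2 _]]. rewrite E in H2. apply H1. rewrite <- H2. ring. Qed.

Lemma PH_clamp p Bp U z t : smooth_piece p -> PH p Bp U -> U z ->
  @ccont R_AbsRing (fun y => Bp (clamp (pa p) (pb p) y) z) t.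
Proof.
  intros [Hab _] H Hz. apply (ccont_clamp_all (fun y => Bp y z)). lra.
  intros w Hw. apply wcont_of_filterlim. apply (H z Hz w Hw).
Qed.

Lemma dg_clamp p t : smooth_piece p -> @ccont R_AbsRing (fun y => pdg p (clamp (pa p) (pb p) y)) t.
Proof.
  intros [Hab [_ Hc]]. apply ccont_clamp_all. lra. intros w Hw. apply wcont_of_ccont. apply ccont_of_contR. auto.
Qed.

Lemma g_clamp p t : smooth_piece p -> @ccont R_AbsRing (fun y => pg p (clamp (pa p) (pb p) y)) t.
Proof.
  intros [Hab [Hd _]]. apply ccont_clamp_all. lra. intros w Hw. apply wcont_of_ccont. eapply ccont_of_deriveR. apply Hd; auto.
Qed.

Lemma piece_bounds p Bp U s : smooth_piece p -> PH p Bp U -> U s ->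
  exists m M Mg, (0 < m)%R /\ (0 <= Mg)%R /\ forall t, (pa p <= t <= pb p)%R ->
    (m <= Cmod (Bp t s))%R /\ (Cmod (Bp t s) <= M)%R /\ (Cmod (pdg p t) <= Mg)%R.
Proof.
  intros Hp H Hs. assert (Hab : (pa p <= pb p)%R) by (destruct Hp; lra).
  destruct (continuity_ab_min (fun t => Cmod (Bp (clamp (pa p) (pb p) t) s)) (pa p) (pb p) Hab) as [tm [Hm1 Hm2]].
  { intros c _. apply ccont_cmod_pt. apply (PH_clamp p Bp U s c Hp H Hs). }
  destruct (continuity_ab_maj (fun t => Cmod (Bp (clamp (pa p) (pb p) t) s)) (pa p) (pb p) Hab) as [tM [HM1 HM2]].
  { intros c _. apply ccont_cmod_pt. apply (PH_clamp p Bp U s c Hp H Hs). }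
  destruct (continuity_ab_maj (fun t => Cmod (pdg p (clamp (pa p) (pb p) t))) (pa p) (pb p) Hab) as [tg [Hg1 Hg2]].
  { intros c _. apply ccont_cmod_pt. apply (dg_clamp p c Hp). }
  exists (Cmod (Bp tm s)), (Cmod (Bp tM s)), (Cmod (pdg p tg)).
  rewrite clamp_id in Hm1, HM1, Hg1 by auto.
  split. apply Cmod_pos. apply (PH_nz p Bp U); auto.
  split. apply Cmod_ge_0.
  intros t Ht. specialize (Hm1 t Ht). specialize (HM1 t Ht). specialize (Hg1 t Ht).
  rewrite clamp_id in Hm1, HM1, Hg1 by auto. auto.
Qed.

Lemma piece_branch p Bp U s r t : smooth_piece p -> PH p Bp U -> (0 < r)%R ->
  (forall z, (Cmod (z - s) < r)%R -> U z) -> (pa p <= t <= pb p)%R ->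
  forall z : C, (Cmod (z - s) < r)%R -> Bp t z * Bp t z = Bp t s * Bp t s + (z - s) /\ @ccont C_AbsRing (fun w => Bp t w) z.
Proof.
  intros Hp H Hr Hball Ht z Hz.
  assert (Hs : U s). { apply Hball. replace (s - s) with (RtoC 0) by ring. rewrite Cmod_0. auto. }
  destruct (H z (Hball z Hz) t Ht) as [_ [H1 [_ H2]]]. destruct (H s Hs t Ht) as [_ [H3 _]].
  split. rewrite H1, H3. rewrite <- (fcub_s (pg p t) s z). ring.
  apply ccont_of_deriveC. exact H2.
Qed.

Lemma piece_J p Bp U s r : smooth_piece p -> PH p Bp U -> (0 < r)%R ->
  (forall z, (Cmod (z - s) < r)%R -> U z) ->
  @is_derive C_AbsRing C_NormedModule (fun z => RIntC (fun t => Bp t z * pdg p t) (pa p) (pb p)) s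
    (/ RtoC 2 * RIntC (fun t => RtoC 1 / Bp t s * pdg p t) (pa p) (pb p)).
Proof.
  intros Hp H Hr Hball.
  assert (Hab : (pa p <= pb p)%R) by (destruct Hp; lra).
  assert (Hs : U s). { apply Hball. replace (s - s) with (RtoC 0) by ring. rewrite Cmod_0. auto. }
  destruct (piece_bounds p Bp U s Hp H Hs) as [m [M [Mg [Hm [HMg Hbd]]]]].
  assert (Hex1 : ex_RInt (fun t => RtoC 1 / Bp t s * pdg p t) (pa p) (pb p)).
  { apply exR_clamp; auto. intros t. cc. all: try apply (PH_clamp p Bp U s t Hp H Hs). all: try apply (dg_clamp p t Hp).
    all: try (apply (PH_nz p Bp U); auto; apply clamp_in; auto). }
  rewrite <- (@is_RInt_unique C_R_CompleteNormedModule _ _ _ _ (is_RInt_Cmult _ _ _ _ (/ RtoC 2) (@RInt_correct C_R_CompleteNormedModule _ _ _ Hex1))).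
  apply (deriv_param (fun z t => Bp t z * pdg p t) _ (pa p) (pb p) s (Rmin r (m * m / 2)) (/ (m * m * m) * Mg)); auto.
  - apply Rmin_pos; auto. nra.
  - apply Rmult_le_pos; auto. left. apply Rinv_0_lt_compat. repeat apply Rmult_lt_0_compat; lra.
  - intros y Hy. apply exR_clamp; auto. intros t. cc. apply (PH_clamp p Bp U y t Hp H).
    apply Hball. eapply Rlt_le_trans; [exact Hy|apply Rmin_l]. apply (dg_clamp p t Hp).
  - eexists.
    apply (is_RInt_Cmult _ _ _ _ (/ RtoC 2) (@RInt_correct C_R_CompleteNormedModule _ _ _ Hex1)).
  - intros y t Hy Ht.
    assert (Hy1 : (Cmod (y - s) < r)%R) by (eapply Rlt_le_trans; [exact Hy|apply Rmin_l]).
    assert (Hy2 : (Cmod (y - s) <= m * m / 2)%R) by (left; eapply Rlt_le_trans; [exact Hy|apply Rmin_r]).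
    destruct (Hbd t Ht) as [Hb1 [Hb2 Hb3]].
    assert (Hkey := branch_key (fun w => Bp t w) s r m (y - s) Hm Hb1 Hr
                      (piece_branch p Bp U s r t Hp H Hr Hball Ht) Hy1 ltac:(nra)).
    replace (s + (y - s)) with y in Hkey by ring. simpl in Hkey.
    destruct (piece_branch p Bp U s r t Hp H Hr Hball Ht y Hy1) as [Hsq _].
    assert (Est := estJ (Bp t y) (Bp t s) (y - s) m Hm Hb1 Hsq Hkey Hy2).
    replace (Bp t y * pdg p t - Bp t s * pdg p t - (y - s) * (/ RtoC 2 * (RtoC 1 / Bp t s * pdg p t)))
      with ((Bp t y - Bp t s - (y - s) * (/ RtoC 2 * (RtoC 1 / Bp t s))) * pdg p t) by ring.
    rewrite Cmod_mult.
    assert (T := Cmod_ge_0 (Bp t y - Bp t s - (y - s) * (/ RtoC 2 * (RtoC 1 / Bp t s)))).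
    apply Rle_trans with (/ (m * m * m) * (Cmod (y - s) * Cmod (y - s)) * Mg)%R.
    apply Rmult_le_compat; auto. apply Cmod_ge_0. right. ring.
Qed.

Lemma piece_L p Bp U s r : smooth_piece p -> PH p Bp U -> (0 < r)%R ->
  (forall z, (Cmod (z - s) < r)%R -> U z) ->
  @is_derive C_AbsRing C_NormedModule (fun z => RIntC (fun t => RtoC 1 / Bp t z * pdg p t) (pa p) (pb p)) s
    (- RIntC (fun t => RtoC 1 / (RtoC 2 * (Bp t s * Bp t s * Bp t s)) * pdg p t) (pa p) (pb p)).
Proof.
  intros Hp H Hr Hball.
  assert (Hab : (pa p <= pb p)%R) by (destruct Hp; lra).
  assert (Hs : U s). { apply Hball. replace (s - s) with (RtoC 0) by ring. rewrite Cmod_0. auto. }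
  destruct (piece_bounds p Bp U s Hp H Hs) as [m [M [Mg [Hm [HMg Hbd]]]]].
  assert (HM : (m <= M)%R). { destruct (Hbd (pa p)) as [A1 [A2 _]]. lra. lra. }
  assert (Hex1 : ex_RInt (fun t => RtoC 1 / (RtoC 2 * (Bp t s * Bp t s * Bp t s)) * pdg p t) (pa p) (pb p)).
  { apply exR_clamp; auto. intros t. cc. all: try apply (PH_clamp p Bp U s t Hp H Hs). all: try apply (dg_clamp p t Hp).
    all: try (repeat apply Cmult_neq_0; try apply R2ne; apply (PH_nz p Bp U); auto; apply clamp_in; auto). }
  replace (- RIntC (fun t => RtoC 1 / (RtoC 2 * (Bp t s * Bp t s * Bp t s)) * pdg p t) (pa p) (pb p))
    with (RtoC (-1) * RIntC (fun t => RtoC 1 / (RtoC 2 * (Bp t s * Bp t s * Bp t s)) * pdg p t) (pa p) (pb p)) by ring.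
  rewrite <- (@is_RInt_unique C_R_CompleteNormedModule _ _ _ _ (is_RInt_Cmult _ _ _ _ (RtoC (-1)) (@RInt_correct C_R_CompleteNormedModule _ _ _ Hex1))).
  assert (Hm6 : (0 < m * m * m * m * m * m)%R) by (repeat apply Rmult_lt_0_compat; lra).
  apply (deriv_param (fun z t => RtoC 1 / Bp t z * pdg p t) _ (pa p) (pb p) s (Rmin r (m * m / 2))
     ((m + 3 * M) * / (m * m * m * m * m * m) * Mg)); auto.
  - apply Rmin_pos; auto. nra.
  - apply Rmult_le_pos; auto. apply Rmult_le_pos. lra. left. apply Rinv_0_lt_compat. auto.
  - intros y Hy. assert (Uy : U y) by (apply Hball; eapply Rlt_le_trans; [exact Hy|apply Rmin_l]).
    apply exR_clamp; auto. intros t. cc. all: try apply (PH_clamp p Bp U y t Hp H Uy). all: try apply (dg_clamp p t Hp).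
    all: try (apply (PH_nz p Bp U); auto; apply clamp_in; auto).
  - eexists.
    apply (is_RInt_Cmult _ _ _ _ (RtoC (-1)) (@RInt_correct C_R_CompleteNormedModule _ _ _ Hex1)).
  - intros y t Hy Ht.
    assert (Hy1 : (Cmod (y - s) < r)%R) by (eapply Rlt_le_trans; [exact Hy|apply Rmin_l]).
    assert (Hy2 : (Cmod (y - s) <= m * m / 2)%R) by (left; eapply Rlt_le_trans; [exact Hy|apply Rmin_r]).
    destruct (Hbd t Ht) as [Hb1 [Hb2 Hb3]].
    assert (Hkey := branch_key (fun w => Bp t w) s r m (y - s) Hm Hb1 Hr
                      (piece_branch p Bp U s r t Hp H Hr Hball Ht) Hy1 ltac:(nra)).
    replace (s + (y - s)) with y in Hkey by ring. simpl in Hkey.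
    destruct (piece_branch p Bp U s r t Hp H Hr Hball Ht y Hy1) as [Hsq _].
    assert (Est := estL (Bp t y) (Bp t s) (y - s) m M Hm Hb1 Hb2 Hsq Hkey Hy2).
    replace (RtoC 1 / Bp t y * pdg p t - RtoC 1 / Bp t s * pdg p t - (y - s) * (RtoC (-1) * (RtoC 1 / (RtoC 2 * (Bp t s * Bp t s * Bp t s)) * pdg p t)))
      with ((RtoC 1 / Bp t y - RtoC 1 / Bp t s - (y - s) * (RtoC (-1) * (RtoC 1 / (RtoC 2 * (Bp t s * Bp t s * Bp t s))))) * pdg p t) by ring.
    rewrite Cmod_mult.
    assert (T := Cmod_ge_0 (RtoC 1 / Bp t y - RtoC 1 / Bp t s - (y - s) * (RtoC (-1) * (RtoC 1 / (RtoC 2 * (Bp t s * Bp t s * Bp t s)))))).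
    apply Rle_trans with ((m + 3 * M) * / (m * m * m * m * m * m) * (Cmod (y - s) * Cmod (y - s)) * Mg)%R.
    apply Rmult_le_compat; auto. apply Cmod_ge_0. right. ring.
Qed.

Lemma piece_FTC p Bp U s : smooth_piece p -> PH p Bp U -> U s -> s <> RtoC 0 -> s <> RtoC (-4/3) ->
  @is_RInt C_R_NormedModule (fun t => (RtoC 1 / (Bp t s * Bp t s * Bp t s) - rho s * Bp t s) * pdg p t) (pa p) (pb p)
    (rho s * Pp (pg p (pb p)) s / Bp (pb p) s - rho s * Pp (pg p (pa p)) s / Bp (pa p) s).
Proof.
  intros Hp H Hs Hs1 Hs2. assert (Hp' := Hp). destruct Hp' as [Hab [Hgd Hdc]].
  set (a := pa p) in *. set (b := pb p) in *.
  set (F := fun t => rho s * Pp (pg p t) s / Bp t s).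
  set (f := fun t => (RtoC 1 / (Bp t s * Bp t s * Bp t s) - rho s * Bp t s) * pdg p t).
  assert (Hnz : forall y, Bp (clamp a b y) s <> 0). { intros y. apply (PH_nz p Bp U); auto. apply clamp_in. unfold a, b. destruct Hp as [Hab0 _]. lra. }
  assert (HR := FTC_open (fun y => F (clamp a b y)) (fun y => f (clamp a b y)) a b Hab).
  cbv beta in HR. rewrite (clamp_id a b b), (clamp_id a b a) in HR by lra.
  apply (@is_RInt_ext C_R_NormedModule (fun y => f (clamp a b y))).
  { intros x Hx. rewrite Rmin_left, Rmax_right in Hx by lra. rewrite clamp_id; auto. lra. }
  apply HR.
  - intros t. unfold F. cc. all: try apply (PH_clamp p Bp U s t Hp H Hs). all: try apply (g_clamp p t Hp). apply Hnz.
  - intros t. unfold f. cc. all: try apply (PH_clamp p Bp U s t Hp H Hs). all: try apply (dg_clamp p t Hp).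
    all: try (repeat apply Cmult_neq_0; apply Hnz).
  - intros t Ht. rewrite clamp_id by lra.
    apply (is_derive_ext_loc F).
    { exists (mkposreal _ (Rmin_pos _ _ (Rlt_Rminus _ _ (proj1 Ht)) (Rlt_Rminus _ _ (proj2 Ht)))).
      intros y Hy. simpl in Hy. change (Rabs (y - t) < Rmin (t - a) (b - t))%R in Hy.
      assert (T3 := Rmin_l (t - a) (b - t)). assert (T4 := Rmin_r (t - a) (b - t)).
      apply Rabs_def2 in Hy. rewrite clamp_id; auto. lra. }
    unfold F, f. apply (dF_interior (pg p) (fun t => Bp t s) (pdg p t) s a b t); auto.
    + apply Hgd. lra.
    + apply wcont_of_filterlim. assert (Ht2 : (pa p <= t <= pb p)%R) by (unfold a, b in *; lra). destruct (H s Hs t Ht2) as [_ [_ [H3 _]]]. exact H3.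
    + intros y Hy. destruct (H s Hs y Hy) as [_ [H1 _]]. split; auto. apply (PH_nz p Bp U); auto.
Qed.


Lemma csum_derive (F : nat -> C -> C) (D : nat -> C) n s :
  (forall i, (i < n)%nat -> @is_derive C_AbsRing C_NormedModule (F i) s (D i)) ->
  @is_derive C_AbsRing C_NormedModule (fun z => csum n (fun i => F i z)) s (csum n D).
Proof.
  induction n as [|n IH]; intros Hd; simpl.
  - apply (@is_derive_const C_AbsRing C_NormedModule).
  - apply (@is_derive_plus C_AbsRing C_NormedModule). apply IH. intros i Hi. apply Hd. lia. apply Hd. lia.
Qed.

Lemma csum_ext n (a b : nat -> C) : (forall i, (i < n)%nat -> a i = b i) -> csum n a = csum n b.
Proof. induction n as [|n IH]; intros H; simpl; auto. rewrite IH, H; auto. Qed.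

Lemma csum_scale n (a : nat -> C) c : csum n (fun i => c * a i) = c * csum n a.
Proof. induction n as [|n IH]; simpl. ring. rewrite IH. ring. Qed.

Lemma csum_plus n (a b : nat -> C) : csum n (fun i => a i + b i) = csum n a + csum n b.
Proof. induction n as [|n IH]; simpl. ring. rewrite IH. ring. Qed.

Lemma csum_opp n (a : nat -> C) : csum n (fun i => - a i) = - csum n a.
Proof. induction n as [|n IH]; simpl. ring. rewrite IH. ring. Qed.

Lemma telesc (E S0 : nat -> C) n : (0 < n)%nat -> (forall i, (S i < n)%nat -> E i = S0 (S i)) ->
  E (pred n) = S0 O -> csum n (fun i => E i - S0 i) = 0.
Proof.
  intros Hn Hj Hc.
  assert (G : forall m, (0 < m)%nat -> (m <= n)%nat -> csum m (fun i => E i - S0 i) = E (pred m) - S0 O).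
  { induction m as [|m IH]; intros H1 H2. lia. destruct m as [|m].
    - simpl. ring.
    - change (csum (S (S m)) (fun i => E i - S0 i)) with (csum (S m) (fun i => E i - S0 i) + (E (S m) - S0 (S m))).
      rewrite IH by lia. simpl. rewrite (Hj m) by lia. ring. }
  rewrite G by lia. rewrite Hc. ring.
Qed.

Lemma piece_exJ p Bp U s : smooth_piece p -> PH p Bp U -> U s ->
  @ex_RInt C_R_NormedModule (fun t => Bp t s * pdg p t) (pa p) (pb p).
Proof.
  intros Hp H Hs. assert (Hab : (pa p <= pb p)%R) by (destruct Hp; lra).
  apply exR_clamp; auto. intros t. cc. apply (PH_clamp p Bp U s t Hp H Hs). apply (dg_clamp p t Hp).
Qed.

Lemma piece_K p Bp U s : smooth_piece p -> PH p Bp U -> U s -> s <> RtoC 0 -> s <> RtoC (-4/3) ->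
  RIntC (fun t => RtoC 1 / (RtoC 2 * (Bp t s * Bp t s * Bp t s)) * pdg p t) (pa p) (pb p) =
  / RtoC 2 * ((rho s * Pp (pg p (pb p)) s / Bp (pb p) s - rho s * Pp (pg p (pa p)) s / Bp (pa p) s)
              + rho s * RIntC (fun t => Bp t s * pdg p t) (pa p) (pb p)).
Proof.
  intros Hp H Hs Hs1 Hs2.
  assert (F1 := piece_FTC p Bp U s Hp H Hs Hs1 Hs2).
  assert (F2 := is_RInt_Cmult _ _ _ _ (rho s) (@RInt_correct C_R_CompleteNormedModule _ _ _ (piece_exJ p Bp U s Hp H Hs))).
  assert (F3 := is_RInt_Cmult _ _ _ _ (/ RtoC 2) (@is_RInt_plus C_R_NormedModule _ _ _ _ _ _ F1 F2)).
  apply (@is_RInt_unique C_R_CompleteNormedModule).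
  eapply (@is_RInt_ext C_R_NormedModule); [|exact F3].
  intros t Ht. destruct Hp as [Hab _]. rewrite Rmin_left, Rmax_right in Ht by lra.
  assert (Hn : Bp t s <> 0) by (apply (PH_nz p Bp U); auto; lra).
  change (plus ?x ?y) with (x + y). match goal with |- ?x = ?y => change (@eq C x y) end. field; repeat split; auto; apply R2ne.
Qed.


Lemma part2 : forall (c : nat -> cpiece) (n : nat) (U : C -> Prop) (B : nat -> R -> C -> C),
     closed_pw_smooth c n ->
     @open C_UniformSpace U ->
     branch_along c n U B ->
     let J := fun s => cint c n (fun i t => B i t s) in
     let L := fun s => cint c n (fun i t => RtoC 1 / B i t s) in
     let K := fun s => cint c n (fun i t => RtoC 1 / (RtoC 2 * (B i t s * B i t s * B i t s))) in
     forall s, U s ->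
       @is_derive C_AbsRing C_NormedModule J s (L s / RtoC 2) /\
       @is_derive C_AbsRing C_NormedModule L s (- K s) /\
       (s <> RtoC 0 -> s <> RtoC (-4/3) -> K s = RtoC (1/2) * rho s * J s).
Proof.
  intros c n U B Hcl HU Hbr J L K s Hs.
  destruct Hcl as [Hn [Hsm [Hjun Hclo]]].
  assert (HPH : forall i, (i < n)%nat -> PH (c i) (B i) U).
  { intros i Hi z Hz t Ht. exact (proj1 (Hbr z Hz) i t Hi Ht). }
  destruct (locC s U (HU s Hs)) as [r [Hr Hball]].
  split; [|split].
  - unfold J, L, cint.
    replace (csum n (fun i => RIntC (fun t => RtoC 1 / B i t s * pdg (c i) t) (pa (c i)) (pb (c i))) / RtoC 2)
      with (csum n (fun i => / RtoC 2 * RIntC (fun t => RtoC 1 / B i t s * pdg (c i) t) (pa (c i)) (pb (c i))))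
      by (rewrite csum_scale; field; apply R2ne).
    apply (csum_derive (fun i z => RIntC (fun t => B i t z * pdg (c i) t) (pa (c i)) (pb (c i)))).
    intros i Hi. apply (piece_J (c i) (B i) U s r); auto.
  - unfold L, K, cint. rewrite <- csum_opp.
    apply (csum_derive (fun i z => RIntC (fun t => RtoC 1 / B i t z * pdg (c i) t) (pa (c i)) (pb (c i)))).
    intros i Hi. apply (piece_L (c i) (B i) U s r); auto.
  - intros Hs1 Hs2. unfold K, J, cint.
    rewrite (csum_ext n _ (fun i => / RtoC 2 * ((rho s * Pp (pg (c i) (pb (c i))) s / B i (pb (c i)) s
         - rho s * Pp (pg (c i) (pa (c i))) s / B i (pa (c i)) s)
         + rho s * RIntC (fun t => B i t s * pdg (c i) t) (pa (c i)) (pb (c i))))).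
    2:{ intros i Hi. apply (piece_K (c i) (B i) U s); auto. }
    rewrite csum_scale, csum_plus, csum_scale.
    rewrite (telesc (fun i => rho s * Pp (pg (c i) (pb (c i))) s / B i (pb (c i)) s)
                    (fun i => rho s * Pp (pg (c i) (pa (c i))) s / B i (pa (c i)) s) n Hn).
    + replace (RtoC (1/2)) with (/ RtoC 2). ring.
      rewrite RtoC_div by lra. field; apply R2ne.
    + intros i Hi. rewrite (Hjun i Hi). rewrite (proj1 (proj2 (Hbr s Hs)) i Hi). reflexivity.
    + rewrite Hclo. rewrite (proj2 (proj2 (Hbr s Hs))). reflexivity.
Qed.


Lemma part1 : forall (s u : C) (Rb : C -> C),
     s <> RtoC 0 -> s <> RtoC (-4/3) ->
     Rb u <> RtoC 0 ->
     @ex_derive C_AbsRing C_NormedModule Rb u ->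
     locally u (fun v => Rb v * Rb v = fcub v s) ->
     @is_derive C_AbsRing C_NormedModule
       (fun v => rho s * Pp v s / Rb v) u
       (RtoC 1 / (Rb u * Rb u * Rb u) - rho s * Rb u).
Proof.
  intros s u Rb Hs1 Hs2 Hu Hd Hl.
  apply locC in Hl. destruct Hl as [d0 [Hd0 Hl]].
  assert (Hc := ccont_of_deriveC Rb u Hd).
  assert (Hsq : Rb u * Rb u = fcub u s). { apply Hl. replace (u - u) with (RtoC 0) by ring. rewrite Cmod_0. auto. }
  rewrite <- (CA u s (Rb u) Hsq Hu Hs1 Hs2).
  apply (carC _ (fun v => Psi v u s (Rb v) (Rb u))).
  - assert (Huu : Rb u + Rb u <> 0). { replace (Rb u + Rb u) with (RtoC 2 * Rb u) by ring. apply Cmult_neq_0; auto. apply R2ne. }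
    unfold Psi, Pi, Phi. cc; try exact Hc; auto. all: try (apply Cmult_neq_0; auto). all: try apply R3ne.
  - destruct (Hc (Cmod (Rb u))) as [d1 [Hd1 H1]]. apply Cmod_pos; auto.
    exists (Rmin d0 d1). split. apply Rmin_pos; auto. intros v Hv.
    assert (Hv0 : (Cmod (v - u) < d0)%R) by (eapply Rlt_le_trans; [exact Hv| apply Rmin_l]).
    assert (Hv1 : (Cmod (v - u) < d1)%R) by (eapply Rlt_le_trans; [exact Hv| apply Rmin_r]).
    destruct (near_nz (Rb v) (Rb u) (H1 v Hv1)) as [N1 N2].
    apply DI; auto.
Qed.

Theorem proposition3 :
  (* Part 1: the pointwise identity dQ/du = 1/R^3 - rho R, for a branch Rb of
     R(.,s) (holomorphic at u, Rb^2 = u^3/3+u^2+s near u), the same branch being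
     used in Q and on the right-hand side. *)
  (forall (s u : C) (Rb : C -> C),
     s <> RtoC 0 -> s <> RtoC (-4/3) ->
     Rb u <> RtoC 0 ->
     @ex_derive C_AbsRing C_NormedModule Rb u ->
     locally u (fun v => Rb v * Rb v = fcub v s) ->
     @is_derive C_AbsRing C_NormedModule
       (fun v => rho s * Pp v s / Rb v) u
       (RtoC 1 / (Rb u * Rb u * Rb u) - rho s * Rb u)) /\
  (* Part 2: consequences for J(s) = \oint R dv and L(s) = \oint dv / R. *)
  (forall (c : nat -> cpiece) (n : nat) (U : C -> Prop) (B : nat -> R -> C -> C),
     closed_pw_smooth c n ->
     @open C_UniformSpace U ->
     branch_along c n U B ->
     let J := fun s => cint c n (fun i t => B i t s) in
     let L := fun s => cint c n (fun i t => RtoC 1 / B i t s) in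
     let K := fun s => cint c n (fun i t => RtoC 1 / (RtoC 2 * (B i t s * B i t s * B i t s))) in
     forall s, U s ->
       @is_derive C_AbsRing C_NormedModule J s (L s / RtoC 2) /\
       @is_derive C_AbsRing C_NormedModule L s (- K s) /\
       (s <> RtoC 0 -> s <> RtoC (-4/3) -> K s = RtoC (1/2) * rho s * J s)).
Proof.
  split.
  - exact part1.
  - exact part2.
Qed.
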